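(* Let $\Psi:\mathbb{R}\to\mathbb{R}$ be such that $\Sigma^r(\Psi)$ is dense in $C(\mathbb{R}^r,\mathbb{R})$ in the sense of uniform convergence on compact sets, and let $l\ge2$, $s\ge1$ be integers. Then $\Sigma_l^{r,s}(\Psi)$ is dense in $C(\mathbb{R}^r,\mathbb{R}^s)$ in the sense of uniform convergence on compact sets: for every nonempty compact $K\subset\mathbb{R}^r$, every $g=(g_1,\dots,g_s)\in C(\mathbb{R}^r,\mathbb{R}^s)$ and every $\varepsilon>0$ there is $f=(f_1,\dots,f_s)\in\Sigma_l^{r,s}(\Psi)$ with $\sum_{j=1}^s\sup_{x\in K}|f_j(x)-g_j(x)|<\varepsilon$.
   Context: $\mathbb{A}^n$ is the set of affine functions $\mathbb{R}^n\to\mathbb{R}$. $\Sigma^r(\Psi)=\{\sum_{j=1}^q\beta_j\Psi\circ A_j: q\in\mathbb{N},\beta_j\in\mathbb{R},A_j\in\mathbb{A}^r\}$. Define sets of maps inductively: $I_1^{(q)}=\{(\Psi\circ A_1,\dots,\Psi\circ A_q)^{\mathrm T}: A_1,\dots,A_q\in\mathbb{A}^r\}$ (maps $\mathbb{R}^r\to\mathbb{R}^q$), $I_{k+1}^{(q)}=\{(\Psi\circ A_1,\dots,\Psi\circ A_q)^{\mathrm T}\circ f: q'\in\mathbb{N},\ f\in I_k^{(q')},\ A_j\in\mathbb{A}^{q'}\}$, and $\Sigma_l^{r,s}(\Psi)=\{(A_1,\dots,A_s)^{\mathrm T}\circ f: q'\in\mathbb{N},\ f\in I_{l-1}^{(q')},\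 A_j\in\mathbb{A}^{q'}\}$ (the $l$-layer feedforward networks with activation $\Psi$, affine output layer, input $\mathbb{R}^r$ and output $\mathbb{R}^s$). Density of $\Sigma^r(\Psi)$ in the sense of uniform convergence on compact sets means: for every nonempty compact $K$, $g\in C(\mathbb{R}^r)$, $\varepsilon>0$ there is $f\in\Sigma^r(\Psi)$ with $\sup_K|f-g|<\varepsilon$. *)

(* Defs.v *)
(* R^n is 'rV[R]_n. *)
From HB Require Import structures.
From mathcomp Require Import all_boot all_order all_algebra.
From mathcomp Require Import all_classical all_reals all_analysis.
Set Implicit Arguments. Unset Strict Implicit. Unset Printing Implicit Defensive.
Import Order.TTheory GRing.Theory Num.Theory.
Import numFieldNormedType.Exports.
Local Open Scope classical_set_scope.
Local Open Scope ring_scope.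

Definition affine (R : realType) (n : nat) : set ('rV[R]_n -> R) :=
  [set A | exists (w : 'rV[R]_n) (b : R),
      A = fun x : 'rV[R]_n => \sum_(i < n) w ord0 i * x ord0 i + b].

Definition Sigma (R : realType) (Psi : R -> R) (r : nat) : set ('rV[R]_r -> R) :=
  [set f | exists (q : nat) (beta : 'I_q -> R) (A : 'I_q -> 'rV[R]_r -> R),
      (forall j, affine (A j)) /\
      f = fun x : 'rV[R]_r => \sum_(j < q) beta j * Psi (A j x)].

(* hidden k q = I_{k+1}^{(q)} (maps R^r -> R^q); N = {1,2,...} *)
Fixpoint hidden (R : realType) (Psi : R -> R) (r : nat) (k : nat) (q : nat)
  : set ('rV[R]_r -> 'rV[R]_q) :=
  match k with
  | 0 => [set f | exists A : 'I_q -> 'rV[R]_r -> R,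
            (forall j, affine (A j)) /\ f = fun x : 'rV[R]_r => \row_j Psi (A j x)]
  | k'.+1 => [set f | exists (q' : nat) (h : 'rV[R]_r -> 'rV[R]_q')
                 (A : 'I_q -> 'rV[R]_q' -> R),
            (0 < q')%N /\ @hidden R Psi r k' q' h /\
            (forall j, affine (A j)) /\ f = fun x : 'rV[R]_r => \row_j Psi (A j (h x))]
  end.

(* Sigma_l^{r,s}(Psi), for l >= 2: affine output layer after I_{l-1} *)
Definition SigmaL (R : realType) (Psi : R -> R) (l r s : nat)
  : set ('rV[R]_r -> 'rV[R]_s) :=
  [set f | exists (q' : nat) (h : 'rV[R]_r -> 'rV[R]_q')
             (A : 'I_s -> 'rV[R]_q' -> R),
      (0 < q')%N /\ @hidden R Psi r (l - 2) q' h /\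
      (forall j, affine (A j)) /\ f = fun x : 'rV[R]_r => \row_j A j (h x)].

Definition supdist (R : realType) (r : nat) (K : set 'rV[R]_r)
  (f g : 'rV[R]_r -> R) : \bar R :=
  ereal_sup [set (`|f x - g x|)%:E | x in K].

(* Main.v *)
Require Import Defs.
From HB Require Import structures.
From mathcomp Require Import all_boot all_order all_algebra.
From mathcomp Require Import all_classical all_reals all_analysis.
From mathcomp Require Import ring lra.
Import Order.TTheory GRing.Theory Num.Theory.
Import numFieldNormedType.Exports.
Local Open Scope classical_set_scope.
Local Open Scope ring_scope.

Lemma affine_lsub (R : realType) (q1 q2 : nat) (a : 'rV[R]_q1 -> R) :
  affine a -> affine (fun z : 'rV[R]_(q1 + q2) => a (lsubmx z)).
Proof.
case=> w [b ->]; exists (row_mx w 0), b; apply: funext => z.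
rewrite big_split_ord /= [X in _ = _ + X + _]big1 ?addr0; last first.
  by move=> i _; rewrite row_mxEr mxE mul0r.
congr (_ + _); apply: eq_bigr => i _; by rewrite row_mxEl !mxE.
Qed.

Lemma affine_rsub (R : realType) (q1 q2 : nat) (a : 'rV[R]_q2 -> R) :
  affine a -> affine (fun z : 'rV[R]_(q1 + q2) => a (rsubmx z)).
Proof.
case=> w [b ->]; exists (row_mx 0 w), b; apply: funext => z.
rewrite big_split_ord /= [X in _ = X + _ + _]big1 ?add0r; last first.
  by move=> i _; rewrite row_mxEl mxE mul0r.
congr (_ + _); apply: eq_bigr => i _; by rewrite row_mxEr !mxE.
Qed.

Lemma affine_cst (R : realType) (q : nat) (c : R) : affine (fun _ : 'rV[R]_q => c).
Proof.
exists 0, c; apply: funext => z; rewrite big1 ?add0r // => i _; by rewrite mxE mul0r.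
Qed.

Lemma affine_sum (R : realType) (q : nat) (be : 'I_q -> R) :
  affine (fun z : 'rV[R]_q => \sum_j be j * z ord0 j).
Proof.
exists (\row_j be j), 0; apply: funext => z; rewrite addr0.
by apply: eq_bigr => i _; rewrite mxE.
Qed.

Lemma affine_comp (R : realType) (r q : nat) (A : 'rV[R]_r -> R)
  (a : 'rV[R]_q -> R) (e : 'rV[R]_r) :
  affine A -> affine a -> affine (fun z => A (a z *: e)).
Proof.
case=> w [b ->]; case=> v [c ->].
set C := \sum_(i < r) w ord0 i * e ord0 i.
exists (C *: v), (C * c + b); apply: funext => z.
have -> : forall t : R, \sum_(i < r) w ord0 i * (t *: e) ord0 i = t * C.
  move=> t; rewrite /C mulr_sumr; apply: eq_bigr => i _; rewrite mxE.
  by rewrite mulrCA.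
rewrite addrA; congr (_ + _); rewrite mulrDl; congr (_ + _); last by rewrite mulrC.
rewrite mulr_suml; apply: eq_bigr => i _; rewrite mxE; ring.
Qed.

Lemma hid1 (R : realType) (Psi : R -> R) (r k : nat) :
  exists h, @hidden R Psi r k 1 h.
Proof.
elim: k => [|k [h0 Hh0]].
  by eexists; exists (fun _ _ => 0); split; [move=> _; exact: affine_cst|].
by eexists; exists 1%N, h0, (fun _ _ => 0); split; [|split; [|split]] => //;
  move=> _; exact: affine_cst.
Qed.

Arguments hid1 {R} Psi r k.
Lemma concat (R : realType) (Psi : R -> R) (r k : nat) : forall q1 q2 h1 h2,
  @hidden R Psi r k q1 h1 -> @hidden R Psi r k q2 h2 ->
  exists h, @hidden R Psi r k (q1 + q2) h /\
    forall x, lsubmx (h x) = h1 x /\ rsubmx (h x) = h2 x.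
Proof.
elim: k => [|k IH] q1 q2 h1 h2.
  move=> [A1 [HA1 ->]] [A2 [HA2 ->]].
  pose A j := match fintype.split j with inl i => A1 i | inr i => A2 i end.
  exists (fun x => \row_j Psi (A j x)); split.
    exists A; split => // j; rewrite /A; by case: (fintype.split j).
  move=> x; split; apply/rowP => i; rewrite !mxE /A.
    by rewrite (unsplitK (inl i : 'I_q1 + 'I_q2)).
  by rewrite (unsplitK (inr i : 'I_q1 + 'I_q2)).
move=> [q1' [h1' [A1 [Hq1 [Hh1 [HA1 ->]]]]]] [q2' [h2' [A2 [Hq2 [Hh2 [HA2 ->]]]]]].
have [h' [Hh' Hs]] := IH _ _ _ _ Hh1 Hh2.
pose A j (z : 'rV[R]_(q1' + q2')) := match fintype.split j with
  inl i => A1 i (lsubmx z) | inr i => A2 i (rsubmx z) end.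
exists (fun x => \row_j Psi (A j (h' x))); split.
  exists (q1' + q2')%N, h', A; split; first by rewrite addn_gt0 Hq1.
  split => //; split => // j; rewrite /A; case: (fintype.split j) => i.
    exact: affine_lsub.
  exact: affine_rsub.
move=> x; have [H1 H2] := Hs x.
split; apply/rowP => i; rewrite !mxE /A.
  by rewrite (unsplitK (inl i : 'I_q1 + 'I_q2)) H1.
by rewrite (unsplitK (inr i : 'I_q1 + 'I_q2)) H2.
Qed.

Arguments concat {R Psi r k q1 q2 h1 h2}.

Definition Net (R : realType) (Psi : R -> R) (r k : nat) (f : 'rV[R]_r -> R) :=
  exists q h a, (0 < q)%N /\ @hidden R Psi r k q h /\ affine a /\
    forall x, f x = a (h x).
Arguments Net {R} Psi {r} k f.

Lemma pad (R : realType) (Psi : R -> R) (r k q : nat) h a (f : 'rV[R]_r -> R) :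
  @hidden R Psi r k q h -> affine a -> (forall x, f x = a (h x)) ->
  Net Psi k f.
Proof.
move=> Hh Ha Hf; have [d Hd] := hid1 Psi r k.
have [h' [Hh' Hs]] := concat Hh Hd.
exists (q + 1)%N, h', (fun z => a (lsubmx z)); split; first by rewrite addn1.
split => //; split; first exact: affine_lsub.
by move=> x; rewrite Hf (proj1 (Hs x)).
Qed.

Arguments pad {R Psi r k q h a f}.

Lemma net_cst (R : realType) (Psi : R -> R) (r k : nat) (c : R) :
  Net Psi k (fun _ : 'rV[R]_r => c).
Proof.
have [d Hd] := hid1 Psi r k.
by apply: (pad Hd (affine_cst _ _ c)).
Qed.

Lemma sup_pt (R : realType) (r : nat) (K : set 'rV[R]_r) f g (eps : R) x :
  (supdist K f g < eps%:E)%E -> K x -> `|f x - g x| < eps.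
Proof.
move=> Hs Kx; rewrite -lte_fin; apply: le_lt_trans Hs.
apply: ereal_sup_ubound; by exists x.
Qed.

Arguments sup_pt {R r K f g eps x}.

Lemma pt_sup (R : realType) (r : nat) (K : set 'rV[R]_r) f g (e : R) :
  (forall x, K x -> `|f x - g x| <= e) -> (supdist K f g <= e%:E)%E.
Proof.
move=> H; apply: ge_ereal_sup => _ [x Kx <-]; rewrite lee_fin; exact: H.
Qed.

Definition HypS (R : realType) (Psi : R -> R) (r : nat) :=
  forall (K : set 'rV[R]_r) (g : 'rV[R]_r -> R) (eps : R),
      compact K -> K !=set0 -> continuous g -> 0 < eps ->
      exists f, @Sigma R Psi r f /\ (supdist K f g < eps%:E)%E.

Arguments HypS {R} Psi r.

Lemma base (R : realType) (Psi : R -> R) (r : nat) : HypS Psi r ->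
  forall (K : set 'rV[R]_r) (g : 'rV[R]_r -> R) (eps : R),
    compact K -> continuous g -> 0 < eps ->
    exists f, Net Psi 0 f /\ forall x, K x -> `|f x - g x| < eps.
Proof.
move=> hyp K g eps cK cg he.
have [K0|NK] := pselect (K !=set0); last first.
  exists (fun _ => 0); split; first exact: net_cst.
  by move=> x Kx; exfalso; apply: NK; exists x.
have [f [[q [be [A [HA Hf]]]] Hs]] := hyp K g eps cK K0 cg he.
exists f; split; last by move=> x Kx; exact: sup_pt Hs Kx.
apply: (pad (h := fun x => \row_j Psi (A j x))
         (a := fun z => \sum_j be j * z ord0 j)).
- by exists A.
- exact: affine_sum.
- by move=> x; rewrite Hf; apply: eq_bigr => j _; rewrite mxE.
Qed.

Lemma step (R : realType) (Psi : R -> R) (r k : nat) : HypS Psi r.+1 ->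
  (forall (K : set 'rV[R]_r.+1) (g : 'rV[R]_r.+1 -> R) (eps : R),
    compact K -> continuous g -> 0 < eps ->
    exists f, Net Psi k f /\ forall x, K x -> `|f x - g x| < eps) ->
  forall (K : set 'rV[R]_r.+1) (g : 'rV[R]_r.+1 -> R) (eps : R),
    compact K -> continuous g -> 0 < eps ->
    exists f, Net Psi k.+1 f /\ forall x, K x -> `|f x - g x| < eps.
Proof.
move=> hyp IH K g eps cK cg he.
have [K0|NK] := pselect (K !=set0); last first.
  exists (fun _ => 0); split; first exact: net_cst.
  by move=> x Kx; exfalso; apply: NK; exists x.
have cgK : compact (g @` K) := continuous_compact (continuous_subspaceT cg) cK.
case: (compact_bounded cgK) => M0 [_ HM].
pose M := `|M0| + 1.
have HgM : forall x, K x -> `|g x| <= M.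
  move=> x Kx; apply: (HM M); last by exists x.
  by rewrite /M; have := ler_norm M0; lra.
have M0p : 0 <= M by rewrite /M; have := normr_ge0 M0; lra.
pose B := M + eps.
pose e : 'rV[R]_r.+1 := const_mx 1.
pose K' := [set t *: e | t in `[-B, B]].
have cK' : compact K'.
  apply: continuous_compact; last exact: segment_compact.
  apply: continuous_subspaceT => t; apply: continuousZr_tmp; exact: cvg_id.
have K'0 : K' !=set0.
  exists (0 *: e), 0 => //; rewrite /= in_itv /=; apply/andP; rewrite /B; split; lra.
have cG : continuous (fun y : 'rV[R]_r.+1 => y ord0 ord0) by move=> y; exact: coord_continuous.
have he2 : 0 < eps / 2 by lra.
have [U [[qU [be [A [HA HU]]]] HsU]] := hyp K' _ (eps / 2) cK' K'0 cG he2.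
have [F [[q [h [a [Hq [Hh [Ha HF]]]]]] HFg]] := IH K g (eps / 2) cK cg he2.
exists (fun x => U (F x *: e)); split.
  apply: (pad (h := fun x => \row_j Psi (A j (a (h x) *: e)))
              (a := fun z => \sum_j be j * z ord0 j)).
  - exists q, h, (fun j z => A j (a z *: e)); split => //; split => //; split => // j.
    exact: affine_comp.
  - exact: affine_sum.
  - by move=> x; rewrite HU HF; apply: eq_bigr => j _; rewrite mxE.
move=> x Kx.
have H1 := HFg x Kx; have H2 := HgM x Kx.
have K'x : K' (F x *: e).
  exists (F x) => //; rewrite /= in_itv /= -ler_norml.
  have T := ler_normD (F x - g x) (g x); rewrite subrK in T.
  rewrite /B; lra.
have := sup_pt HsU K'x; rewrite !mxE mulr1 => H3.
have T := ler_normD (U (F x *: e) - F x) (F x - g x).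
rewrite addrA subrK in T; lra.
Qed.

Lemma claimA0 (R : realType) (Psi : R -> R) (k : nat) :
  forall (K : set 'rV[R]_0) (g : 'rV[R]_0 -> R) (eps : R),
    compact K -> continuous g -> 0 < eps ->
    exists f, Net Psi k f /\ forall x, K x -> `|f x - g x| < eps.
Proof.
move=> K g eps _ _ he; exists (fun _ => g 0); split; first exact: net_cst.
by move=> x _; rewrite (thinmx0 x) subrr normr0.
Qed.

Lemma claimA (R : realType) (Psi : R -> R) (r k : nat) : HypS Psi r ->
  forall (K : set 'rV[R]_r) (g : 'rV[R]_r -> R) (eps : R),
    compact K -> continuous g -> 0 < eps ->
    exists f, Net Psi k f /\ forall x, K x -> `|f x - g x| < eps.
Proof.
case: r => [|r] hyp; first exact: claimA0.
elim: k => [|k IH]; first exact: base.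
exact: step.
Qed.

Lemma multi (R : realType) (Psi : R -> R) (r k : nat) : HypS Psi r ->
  forall (K : set 'rV[R]_r) (G : nat -> 'rV[R]_r -> R) (e : R),
  compact K -> (forall j, continuous (G j)) -> 0 < e -> forall n,
  exists q h (A : nat -> 'rV[R]_q -> R), (0 < q)%N /\ @hidden R Psi r k q h /\
    (forall j, affine (A j)) /\
    forall j, (j < n)%N -> forall x, K x -> `|A j (h x) - G j x| < e.
Proof.
move=> hyp K G e cK cG he; elim=> [|n [q1 [h1 [A1 [Hq1 [Hh1 [HA1 HA1e]]]]]]].
  have [d Hd] := hid1 Psi r k.
  exists 1%N, d, (fun _ _ => 0); split => //; split => //; split => //.
  by move=> j; exact: affine_cst.
have [F [[q2 [h2 [a2 [Hq2 [Hh2 [Ha2 HF]]]]]] HFg]] := @claimA R Psi r k hyp K (G n) e cK (cG n) he.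
have [h [Hh Hs]] := concat Hh1 Hh2.
exists (q1 + q2)%N, h, (fun j => if (j < n)%N then fun z => A1 j (lsubmx z)
                                 else fun z => a2 (rsubmx z)).
split; first by rewrite addn_gt0 Hq1.
split => //; split.
  move=> j; case: (j < n)%N; [exact: affine_lsub | exact: affine_rsub].
move=> j; rewrite ltnS leq_eqVlt => /orP [/eqP ->|jn] x Kx.
  by rewrite ltnn (proj2 (Hs x)) -HF; exact: HFg.
by rewrite jn (proj1 (Hs x)); exact: HA1e.
Qed.

Theorem theorem5p1p4 (R : realType) (Psi : R -> R) (r l s : nat) :
  (forall (K : set 'rV[R]_r) (g : 'rV[R]_r -> R) (eps : R),
      compact K -> K !=set0 -> continuous g -> 0 < eps ->
      exists f, @Sigma R Psi r f /\ (supdist K f g < eps%:E)%E) ->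
  (2 <= l)%N -> (1 <= s)%N ->
  forall (K : set 'rV[R]_r) (g : 'rV[R]_r -> 'rV[R]_s) (eps : R),
    compact K -> K !=set0 -> continuous g -> 0 < eps ->
    exists f, @SigmaL R Psi l r s f /\
      (\sum_(j < s) supdist K (fun x => f x ord0 j) (fun x => g x ord0 j)
         < eps%:E)%E.
Proof.
move=> hyp _ Hs K g eps cK _ cg he.
case: s g Hs cg => [//|s] g _ cg.
pose G j x := g x ord0 (inord j : 'I_s.+1).
have cG : forall j, continuous (G j).
  move=> j x; apply: (@continuous_comp _ _ _ g (fun M : 'rV[R]_s.+1 => M ord0 (inord j)) x (cg x)); exact: coord_continuous.
pose e := eps / (s.+2)%:R.
have sp : 0 < (s.+2)%:R :> R by rewrite ltr0n.
have he' : 0 < e by rewrite /e divr_gt0.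
have [q [h [A [Hq [Hh [HA HAe]]]]]] := @multi R Psi r (l - 2) hyp K G e cK cG he' s.+1.
exists (fun x => \row_(j < s.+1) A j (h x)); split.
  by exists q, h, (fun j => A j).
apply: (@le_lt_trans _ _ (\sum_(j < s.+1) e%:E)%E).
  apply: lee_sum => j _; apply: pt_sup => x Kx; rewrite mxE.
  have := HAe j (ltn_ord j) x Kx; rewrite /G inord_val => H; exact: ltW.
rewrite sumEFin lte_fin sumr_const card_ord -mulr_natl /e.
by rewrite mulrA ltr_pdivrMr // mulrC ltr_pM2l // ltr_nat.
Qed.
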